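(* Let $F=\mathbb{Q}$ or $F=\mathbb{Q}(\sqrt{-d})$ for some square-free positive integer $d$, regarded as a subfield of $\mathbb{C}$, with ring of integers $\mathcal{O}_F$. Let $\mathfrak{p}$ be a nonzero prime ideal of $\mathcal{O}_F$, let $\pi\in F$ with $v_\mathfrak{p}(\pi)=1$, and let $b\in\mathcal{O}_F$ be not a square modulo $\mathfrak{p}$, so that $Q=(\pi,b)_F$ is a division algebra. Fix a complex square root $\sqrt{\pi}$ of $\pi$ (so $K=F(\sqrt{\pi})$ is a maximal commutative subfield of $Q$) and consider the codebook $$\mathcal{C}(Q)=\left\{\begin{bmatrix}\alpha+\beta\sqrt{\pi} & \gamma+\delta\sqrt{\pi}\\ b(\gamma-\delta\sqrt{\pi}) & \alpha-\beta\sqrt{\pi}\end{bmatrix}\;\middle|\;\alpha,\beta,\gamma,\delta\in\mathcal{O}_F\right\}\subset M_2(\mathbb{C}).$$ Then $\mathcal{C}(Q)$ satisfies the non-vanishing determinant criterion, i.e. $\inf_{0\neq X\in\mathcal{C}(Q)}|\det X|^2>0$.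
   Context: $v_\mathfrak{p}$ is the $\mathfrak{p}$-adic valuation on $F$. For $a,b\in F^\times$, $(a,b)_F$ is the $F$-algebra with basis $1,\mathbf i,\mathbf j,\mathbf k$ and relations $\mathbf i^2=a$, $\mathbf j^2=b$, $\mathbf i\mathbf j=-\mathbf j\mathbf i=\mathbf k$. The non-vanishing determinant (NVD) criterion for an infinite codebook $\mathcal{C}$ of square complex matrices means that the minimum determinant $\inf_{0\neq X\in\mathcal{C}}|\det X|^2$ is strictly positive. *)

(* Defs.v *)
From HB Require Import structures.
From mathcomp Require Import all_boot all_order all_algebra all_field.
Set Implicit Arguments. Unset Strict Implicit. Unset Printing Implicit Defensive.
Import Order.TTheory GRing.Theory Num.Theory.
Local Open Scope ring_scope.

(* The ambient "C": algC, the algebraic complex numbers (all quantities here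
   are algebraic, so this is a faithful stand-in for C). *)

Definition squarefree_nat (d : nat) : Prop :=
  forall p : nat, prime p -> ~~ (p * p %| d)%N.

(* The base field F as a subset of algC:
   oF = None      : F = Q
   oF = Some d    : F = Q(sqrt(-d)), with sqrt(-d) = sqrtC (-d). *)
Definition inF (oF : option nat) (x : algC) : Prop :=
  match oF with
  | None => exists a : rat, x = ratr a
  | Some d => exists a b : rat, x = ratr a + ratr b * sqrtC (- (d%:R))
  end.

Definition admissible_field (oF : option nat) : Prop :=
  match oF with
  | None => True
  | Some d => (0 < d)%N /\ squarefree_nat d
  end.

Definition inOF (oF : option nat) (x : algC) : Prop := inF oF x /\ x \in Aint.

Definition nonzero_prime_ideal (oF : option nat) (P : algC -> Prop) : Prop :=
  (forall x, P x -> inOF oF x) /\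
  P 0 /\
  (forall x y, P x -> P y -> P (x + y)) /\
  (forall r x, inOF oF r -> P x -> P (r * x)) /\
  ~ P 1 /\
  (forall x y, inOF oF x -> inOF oF y -> P (x * y) -> P x \/ P y) /\
  (exists x, P x /\ x <> 0).

Fixpoint ideal_pow (oF : option nat) (P : algC -> Prop) (n : nat) : algC -> Prop :=
  match n with
  | 0%N => inOF oF
  | n'.+1 => fun x => exists s : seq (algC * algC),
      (forall q, q \in s -> ideal_pow oF P n' q.1 /\ P q.2) /\
      x = \sum_(q <- s) q.1 * q.2
  end.

(* v_P(x) = n (n >= 0) for x in F: x lies in P^n O_(P) but not in P^(n+1) O_(P),
   where O_(P) = { a/s : a in O_F, s in O_F \ P } is the localization. *)
Definition pval_eq (oF : option nat) (P : algC -> Prop) (x : algC) (n : nat) : Prop :=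
  inF oF x /\
  (exists s, inOF oF s /\ ~ P s /\ ideal_pow oF P n (s * x)) /\
  (forall s, inOF oF s -> ~ P s -> ~ ideal_pow oF P n.+1 (s * x)).

Definition nonsquare_mod (oF : option nat) (P : algC -> Prop) (b : algC) : Prop :=
  ~ exists y, inOF oF y /\ P (y ^+ 2 - b).

Definition codeword (pi_sqrt b al be ga de : algC) : 'M[algC]_2 :=
  \matrix_(i < 2, j < 2)
    if (i == 0) && (j == 0) then al + be * pi_sqrt
    else if (i == 0) then ga + de * pi_sqrt
    else if (j == 0) then b * (ga - de * pi_sqrt)
    else al - be * pi_sqrt.

(* Main.v *)
Require Import Defs.
From HB Require Import structures.
From mathcomp Require Import all_boot all_order all_algebra all_field.
From mathcomp Require Import ring lra zify.
Import Order.TTheory GRing.Theory Num.Theory.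
Set Implicit Arguments. Unset Strict Implicit. Unset Printing Implicit Defensive.
Local Open Scope ring_scope.
From Stdlib Require Import Classical.
Lemma w2 (d : nat) : sqrtC (- (d%:R : algC)) ^+ 2 = - d%:R.
Proof. exact: sqrtCK. Qed.

Lemma wconj (d : nat) : (0 < d)%N -> (sqrtC (- (d%:R : algC)))^* = - sqrtC (- d%:R).
Proof.
move=> d0; set w := sqrtC _.
have h : (w^* - w) * (w^* + w) = 0.
  rewrite -subr_sqr -rmorphXn /= w2 rmorphN /= conjC_nat subrr //.
move/eqP: h; rewrite mulf_eq0 => /orP [/eqP h|/eqP h]; last first.
  by apply/eqP; rewrite -addr_eq0 h.
exfalso.
have wr : w \is Num.real by rewrite CrealE; apply/eqP; apply/eqP; rewrite -subr_eq0 h.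
have := @real_exprn_even_ge0 _ 2%N _ wr isT.
rewrite /w w2 oppr_ge0 => h2.
by move: h2; rewrite lern0; lia.

Qed.
Notation cjm := (Num.conj : {rmorphism algC -> algC}).

Lemma inF_ratr oF q : inF oF (ratr q).
Proof. by case: oF => [d|] /=; [exists q, 0; rewrite rmorph0 mul0r addr0 | exists q]. Qed.

Lemma inF_nat oF (n : nat) : inF oF n%:R.
Proof. by rewrite -(ratr_nat algC n); apply: inF_ratr. Qed.

Lemma inF_add oF x y : inF oF x -> inF oF y -> inF oF (x + y).
Proof.
case: oF => [d|] /=.
  move=> [a1 [b1 ->]] [a2 [b2 ->]]; exists (a1 + a2), (b1 + b2).
  rewrite !rmorphD /=; ring.
by move=> [a1 ->] [a2 ->]; exists (a1 + a2); rewrite rmorphD.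
Qed.

Lemma inF_opp oF x : inF oF x -> inF oF (- x).
Proof.
case: oF => [d|] /=.
  move=> [a1 [b1 ->]]; exists (- a1), (- b1).
  rewrite !rmorphN /=; ring.
by move=> [a1 ->]; exists (- a1); rewrite rmorphN.
Qed.

Lemma inF_mul oF x y : inF oF x -> inF oF y -> inF oF (x * y).
Proof.
case: oF => [d|] /=.
  move=> [a1 [b1 ->]] [a2 [b2 ->]]; exists (a1 * a2 - d%:R * b1 * b2), (a1 * b2 + a2 * b1).
  set w := sqrtC _.
  have e : w ^+ 2 = - d%:R by exact: w2.
  rewrite !(rmorphD, rmorphB, rmorphN, rmorphM) /= rmorph_nat.
  transitivity (ratr a1 * ratr a2 + (ratr a1 * ratr b2 + ratr a2 * ratr b1) * w
     + ratr b1 * ratr b2 * w ^+ 2); first ring.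
  rewrite e; ring.
by move=> [a1 ->] [a2 ->]; exists (a1 * a2); rewrite rmorphM.
Qed.

Lemma inF_conj oF x : admissible_field oF -> inF oF x -> inF oF x^*.
Proof.
case: oF => [d|] /=.
  move=> [d0 _] [a1 [b1 ->]]; exists a1, (- b1).
  rewrite rmorphD !(fmorph_rat cjm) rmorphM /= !(fmorph_rat cjm) wconj // rmorphN /=; ring.
by move=> _ [a1 ->]; exists a1; rewrite (fmorph_rat cjm).
Qed.

Lemma inF_rat oF x : admissible_field oF -> inF oF x ->
  (x + x^*) \in Crat /\ (x * x^*) \in Crat.
Proof.
case: oF => [d|] /=.
  move=> [d0 _] [a1 [b1 ->]].
  rewrite rmorphD !(fmorph_rat cjm) rmorphM /= !(fmorph_rat cjm) wconj //.
  set w := sqrtC _.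
  have e : w ^+ 2 = - d%:R by exact: w2.
  split.
    have -> : ratr a1 + ratr b1 * w + (ratr a1 + ratr b1 * - w) = ratr (a1 + a1) :> algC.
      rewrite rmorphD /=; ring.
    exact: Crat_rat.
  have -> : (ratr a1 + ratr b1 * w) * (ratr a1 + ratr b1 * - w)
     = ratr a1 ^+ 2 - ratr b1 ^+ 2 * w ^+ 2 :> algC by ring.
  by rewrite e -(ratr_nat algC d) -!rmorphXn -rmorphN -rmorphM -rmorphB Crat_rat.
by move=> _ [a1 ->]; rewrite (fmorph_rat cjm) -rmorphD -rmorphM !Crat_rat.
Qed.
Lemma OF_add oF x y : inOF oF x -> inOF oF y -> inOF oF (x + y).
Proof. by move=> [? ?] [? ?]; split; [apply: inF_add|apply: rpredD]. Qed.
Lemma OF_mul oF x y : inOF oF x -> inOF oF y -> inOF oF (x * y).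
Proof. by move=> [? ?] [? ?]; split; [apply: inF_mul|apply: rpredM]. Qed.
Lemma OF_opp oF x : inOF oF x -> inOF oF (- x).
Proof. by move=> [? ?]; split; [apply: inF_opp|rewrite rpredN]. Qed.
Lemma OF_sub oF x y : inOF oF x -> inOF oF y -> inOF oF (x - y).
Proof. by move=> hx hy; apply: OF_add => //; apply: OF_opp. Qed.
Lemma OF_nat oF (n : nat) : inOF oF n%:R.
Proof. by split; [apply: inF_nat|apply: rpred_nat]. Qed.
Lemma OF_conj oF x : admissible_field oF -> inOF oF x -> inOF oF x^*.
Proof.
move=> ha [hF hA]; split; first exact: inF_conj.
by rewrite -(Aint_aut cjm x) in hA.
Qed.

Lemma OF_norm oF x : admissible_field oF -> inOF oF x -> exists n : nat, x * x^* = n%:R.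
Proof.
move=> ha hx; have [hF hA] := OF_mul hx (OF_conj ha hx).
have [_ hq] := inF_rat ha (proj1 hx).
have hi := Cint_rat_Aint hq hA.
have : x * x^* \is a Num.nat by rewrite -(intrEge0 (mul_conjC_ge0 x)).
by move/natrP.
Qed.

Lemma OF_tr oF x : admissible_field oF -> inOF oF x -> x + x^* \is a Num.int.
Proof.
move=> ha hx; have [hF hA] := OF_add hx (OF_conj ha hx).
have [hq _] := inF_rat ha (proj1 hx).
exact: Cint_rat_Aint hq hA.
Qed.

Lemma Aint_of oF z : inF oF z -> z + z^* \is a Num.int -> z * z^* \is a Num.int -> inOF oF z.
Proof.
move=> hF hT hN; split => //.
pose T := z + z^*; pose N := z * z^*.
pose q : {poly algC} := (- T)%:P * 'X + N%:P.
apply: (@root_monic_Aint ('X^2 + q)).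
- rewrite /root hornerD hornerXn /q hornerMXaddC !hornerC /T /N.
  apply/eqP; ring.
- apply/monicP; rewrite lead_coefDl ?lead_coefXn // size_polyXn /q size_MXaddC.
  case: ifP => // _; have := size_polyC (- T); case: (_ != 0) => -> //.
- apply/polyOverP => i; rewrite /q !coefD coefXn coefMX !coefC.
  rewrite rpredD ?rpred_nat // rpredD //; case: ifP => _; rewrite ?rpred0 //.
  by case: ifP => _; rewrite ?rpred0 // rpredN.
Qed.

Lemma P_OF oF P x : nonzero_prime_ideal oF P -> P x -> inOF oF x.
Proof. by case=> h _; apply: h. Qed.
Lemma P_0 oF P : nonzero_prime_ideal oF P -> P 0.
Proof. by case=> _ [h _]. Qed.
Lemma P_add oF P x y : nonzero_prime_ideal oF P -> P x -> P y -> P (x + y).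
Proof. by case=> _ [_ [h _]]; apply: h. Qed.
Lemma P_mull oF P r x : nonzero_prime_ideal oF P -> inOF oF r -> P x -> P (r * x).
Proof. by case=> _ [_ [_ [h _]]]; apply: h. Qed.
Lemma P_mulr oF P r x : nonzero_prime_ideal oF P -> inOF oF r -> P x -> P (x * r).
Proof. by move=> HP hr hx; rewrite mulrC; apply: (P_mull HP). Qed.
Lemma P_1 oF P : nonzero_prime_ideal oF P -> ~ P 1.
Proof. by case=> _ [_ [_ [_ [h _]]]]. Qed.
Lemma P_prime oF P x y : nonzero_prime_ideal oF P -> inOF oF x -> inOF oF y ->
  P (x * y) -> P x \/ P y.
Proof. by case=> _ [_ [_ [_ [_ [h _]]]]]; apply: h. Qed.
Lemma P_opp oF P x : nonzero_prime_ideal oF P -> P x -> P (- x).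
Proof.
move=> HP hx; rewrite -mulN1r; apply: (P_mull HP) => //.
by apply: OF_opp; apply: OF_nat 1.
Qed.
Lemma P_sub oF P x y : nonzero_prime_ideal oF P -> P x -> P y -> P (x - y).
Proof. by move=> HP hx hy; apply: (P_add HP) => //; apply: (P_opp HP). Qed.

Lemma ipow1 oF P x : nonzero_prime_ideal oF P -> ideal_pow oF P 1 x -> P x.
Proof.
move=> HP /= [s [hs ->]]; elim: s hs => [|q s IH] hs.
  by rewrite big_nil; apply: P_0 HP.
rewrite big_cons; apply: (P_add HP).
  by have [h1 h2] := hs q (mem_head _ _); apply: (P_mull HP).
by apply: IH => q' hq'; apply: hs; rewrite in_cons hq' orbT.
Qed.

Lemma ipow2_intro oF P x1 y1 x2 y2 : nonzero_prime_ideal oF P ->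
  P x1 -> P y1 -> P x2 -> P y2 -> ideal_pow oF P 2 (x1 * y1 + x2 * y2).
Proof.
move=> HP h1 h2 h3 h4 /=.
have i1 : forall x, P x -> exists s : seq (algC * algC),
   (forall q, q \in s -> inOF oF q.1 /\ P q.2) /\ x = \sum_(q <- s) q.1 * q.2.
  move=> x hx; exists [:: (1, x)]; split; last by rewrite big_cons big_nil mul1r addr0.
  by move=> q; rewrite inE => /eqP -> /=; split => //; apply: OF_nat 1.
exists [:: (x1, y1); (x2, y2)]; split; last by rewrite !big_cons big_nil addr0.
by move=> q; rewrite !inE => /orP [] /eqP -> /=; split => //; apply: i1.
Qed.
Lemma P_nat_mul oF P (a b : nat) : nonzero_prime_ideal oF P -> P b%:R -> P (a * b)%N%:R.
Proof. by move=> HP hb; rewrite natrM; apply: (P_mull HP) => //; apply: OF_nat. Qed.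

Lemma P_nat_prime_aux oF P : nonzero_prime_ideal oF P ->
  forall n, P n%:R -> (0 < n)%N -> exists p, prime p /\ P p%:R.
Proof.
move=> HP n; elim: n {-2}n (leqnn n) => [|N IH] n hn hP hpos; first by case: n hn hpos hP.
have [/eqP n1|n1] := boolP (n == 1%N).
  by exfalso; apply: (P_1 HP); move: hP; rewrite n1.
have n1' : (1 < n)%N by lia.
set q := pdiv n.
have pq : prime q by apply: pdiv_prime.
have qd : (q %| n)%N by apply: pdiv_dvd.
have e : n = (n %/ q * q)%N by rewrite divnK.
move: hP; rewrite e natrM => /(P_prime HP (OF_nat _ _) (OF_nat _ _)) [h|h].
  apply: (IH (n %/ q)%N) => //.
    have := @ltn_Pdiv n q (prime_gt1 pq) hpos; lia.
  by rewrite divn_gt0 ?prime_gt0 // dvdn_leq.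
by exists q.
Qed.

Lemma P_nat_prime oF P : admissible_field oF -> nonzero_prime_ideal oF P ->
  exists p, prime p /\ P p%:R.
Proof.
move=> ha HP; have [_ [_ [_ [_ [_ [_ [x [hx x0]]]]]]]] := HP.
have hxo := P_OF HP hx.
have [n hn] := OF_norm ha hxo.
have hPn : P n%:R by rewrite -hn; apply: (P_mulr HP) => //; apply: OF_conj.
apply: (P_nat_prime_aux HP hPn).
rewrite lt0n; apply/negP => /eqP n0; move: hn; rewrite n0 => /eqP.
by rewrite mulf_eq0 conjC_eq0 orbb; apply/negP; apply/eqP.
Qed.

Lemma egcd1 (p m : nat) : prime p -> ~~ (p %| m)%N -> (0 < m)%N ->
  exists k j, (k * m = j * p + 1)%N.
Proof.
move=> pp npm m0.
have cop : coprime m p by rewrite coprime_sym prime_coprime.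
case: (egcdnP p m0) => km kn e _; exists km, kn.
by rewrite e (eqP cop).
Qed.

Lemma Pnat_dvd oF P (p m : nat) : nonzero_prime_ideal oF P -> prime p -> P p%:R ->
  P m%:R -> (p %| m)%N.
Proof.
move=> HP pp hp hm; apply/negPn/negP => npm.
have m0 : (0 < m)%N.
  by case: m hm npm => // _; rewrite dvdn0.
have [k [j e]] := egcd1 pp npm m0.
apply: (P_1 HP).
have -> : (1 : algC) = (k * m)%N%:R - (j * p)%N%:R by rewrite e natrD; ring.
by apply: (P_sub HP); rewrite natrM; apply: (P_mull HP) => //; apply: OF_nat.
Qed.

Lemma dvd_Pnat oF P (p m : nat) : nonzero_prime_ideal oF P -> P p%:R -> (p %| m)%N -> P m%:R.
Proof. by move=> HP hp /dvdnP [k ->]; apply: (P_nat_mul _ HP). Qed.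

Lemma inv_nat oF P (p m : nat) : nonzero_prime_ideal oF P -> prime p -> P p%:R ->
  ~ P m%:R -> exists k : nat, P ((k * m)%N%:R - 1).
Proof.
move=> HP pp hp hm.
have npm : ~~ (p %| m)%N by apply/negP => h; apply: hm; apply: (dvd_Pnat HP hp h).
have m0 : (0 < m)%N by case: m hm npm => // h; exfalso; apply: h; apply: (P_0 HP).
have [k [j e]] := egcd1 pp npm m0.
exists k; rewrite e natrD addrK; exact: (P_nat_mul _ HP).
Qed.
Lemma L3 oF P (p : nat) u : admissible_field oF -> nonzero_prime_ideal oF P ->
  prime p -> P p%:R -> inOF oF u -> ~ P u -> exists c, inOF oF c /\ P (u * c - 1).
Proof.
move=> ha HP pp hp hu nPu.
have hu' := OF_conj ha hu.
have [Pu'|nPu'] := classic (P u^*); last first.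
  have [n hn] := OF_norm ha hu.
  have nPn : ~ P n%:R.
    by rewrite -hn => /(P_prime HP hu hu') [].
  have [k hk] := inv_nat HP pp hp nPn.
  exists (k%:R * u^*); split; first by apply: OF_mul => //; apply: OF_nat.
  by rewrite mulrCA hn -natrM.
set T := u + u^*.
have hT : inOF oF T by apply: OF_add.
have nPT : ~ P T.
  move=> h; apply: nPu; have -> : u = T - u^* by rewrite /T addrK.
  exact: (P_sub HP).
have Ti : T \is a Num.int by exact: (OF_tr ha hu).
have : T ^+ 2 \is a Num.nat.
  rewrite -intrEge0; first by apply: rpredX.
  by apply: real_exprn_even_ge0 => //; apply: Rreal_int.
move/natrP => [m hm].
have nPm : ~ P m%:R.
  by rewrite -hm expr2 => /(P_prime HP hT hT) [].
have [k hk] := inv_nat HP pp hp nPm.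
exists (k%:R * T); split; first by apply: OF_mul => //; apply: OF_nat.
have -> : u * (k%:R * T) - 1 = (- (k%:R * T)) * u^* + ((k * m)%N%:R - 1).
  rewrite natrM -hm /T; ring.
apply: (P_add HP) => //; apply: (P_mull HP) => //.
by apply: OF_opp; apply: OF_mul => //; apply: OF_nat.
Qed.

Lemma nonsq_step oF P (p : nat) b x y : admissible_field oF -> nonzero_prime_ideal oF P ->
  prime p -> P p%:R -> inOF oF b -> nonsquare_mod oF P b ->
  inOF oF x -> inOF oF y -> P (x ^+ 2 - b * y ^+ 2) -> P x /\ P y.
Proof.
move=> ha HP pp hp hb nsq hx hy hP.
have Py : P y.
  apply: NNPP => nPy.
  have [c [hc hyc]] := L3 ha HP pp hp hy nPy.
  apply: nsq; exists (x * c); split; first exact: OF_mul.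
  have -> : (x * c) ^+ 2 - b = c ^+ 2 * (x ^+ 2 - b * y ^+ 2) + (b * (y * c + 1)) * (y * c - 1)
    by ring.
  apply: (P_add HP); apply: (P_mull HP) => //.
    by rewrite expr2; apply: OF_mul.
  by apply: OF_mul => //; apply: OF_add => //; [apply: OF_mul | apply: OF_nat 1].
split => //.
have : P (x * x).
  have -> : x * x = (x ^+ 2 - b * y ^+ 2) + (b * y) * y by ring.
  apply: (P_add HP) => //; apply: (P_mull HP) => //; exact: OF_mul.
by case/(P_prime HP hx hx).
Qed.
Lemma all_in_P oF P (p : nat) pi b al be ga de : admissible_field oF ->
  nonzero_prime_ideal oF P -> prime p -> P p%:R -> inOF oF b -> nonsquare_mod oF P b ->
  pval_eq oF P pi 1 -> inOF oF al -> inOF oF be -> inOF oF ga -> inOF oF de ->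
  al ^+ 2 - pi * be ^+ 2 - b * ga ^+ 2 + b * pi * de ^+ 2 = 0 ->
  [/\ P al, P be, P ga & P de].
Proof.
move=> ha HP pp hp hb nsq [_ [[s0 [hs0 [nPs0 hs0pi]]] hno]] hal hbe hga hde E.
have Pt : P (s0 * pi) by apply: (ipow1 HP).
set X := al ^+ 2 - b * ga ^+ 2.
set U := be ^+ 2 - b * de ^+ 2.
have hX : inOF oF X by apply: OF_sub; [rewrite expr2; apply: OF_mul | apply: OF_mul => //; rewrite expr2; apply: OF_mul].
have hU : inOF oF U by apply: OF_sub; [rewrite expr2; apply: OF_mul | apply: OF_mul => //; rewrite expr2; apply: OF_mul].
have eq1 : s0 * X = (s0 * pi) * U.
  apply/eqP; rewrite -subr_eq0; apply/eqP.
  transitivity (s0 * (al ^+ 2 - pi * be ^+ 2 - b * ga ^+ 2 + b * pi * de ^+ 2)).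
    rewrite /X /U; ring.
  by rewrite E mulr0.
have PX : P X.
  have : P (s0 * X) by rewrite eq1; apply: (P_mulr HP).
  by case/(P_prime HP hs0 hX).
have [Pal Pga] := nonsq_step ha HP pp hp hb nsq hal hga PX.
have PU : P U.
  apply: NNPP => nPU.
  have hs : inOF oF (s0 * U) by apply: OF_mul.
  have nPs : ~ P (s0 * U) by case/(P_prime HP hs0 hU).
  apply: (hno _ hs nPs).
  have -> : s0 * U * pi = (s0 * al) * al + (- (s0 * b * ga)) * ga.
    transitivity (s0 * X); first by rewrite eq1; ring.
    rewrite /X; ring.
  apply: (ipow2_intro HP) => //.
    by apply: (P_mull HP).
  apply: (P_opp HP); apply: (P_mull HP) => //; exact: OF_mul.
have [Pbe Pde] := nonsq_step ha HP pp hp hb nsq hbe hde PU.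
by split.
Qed.
Lemma pR0 (p : nat) : prime p -> (p%:R : algC) != 0.
Proof. by move=> pp; rewrite pnatr_eq0 -lt0n prime_gt0. Qed.

Lemma conj_pinv (p : nat) : ((p%:R)^-1 : algC)^* = (p%:R)^-1.
Proof. by apply: conj_Crat; rewrite rpredV rpred_nat. Qed.

Lemma OF_div oF (p : nat) w (A B : algC) : admissible_field oF -> prime p ->
  inOF oF w -> A \is a Num.int -> B \is a Num.int ->
  w + w^* = p%:R * A -> w * w^* = p%:R ^+ 2 * B -> inOF oF ((p%:R)^-1 * w).
Proof.
move=> ha pp hw hA hB eT eN.
have p0 := pR0 pp.
apply: (Aint_of (oF := oF)).
- apply: inF_mul; last exact: (proj1 hw).
  by rewrite -(ratr_nat algC p) -fmorphV; apply: inF_ratr.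
- rewrite rmorphM /= conj_pinv -mulrDr eT mulrA mulVf // mul1r //.
- rewrite rmorphM /= conj_pinv.
  have -> : (p%:R)^-1 * w * ((p%:R)^-1 * w^*) = ((p%:R)^-1) ^+ 2 * (w * w^*) by ring.
  by rewrite eN mulrA -exprMn mulVf // expr1n mul1r.
Qed.
Lemma norm_div (p : nat) w (B : algC) : prime p ->
  w * w^* = p%:R ^+ 2 * B -> ((p%:R)^-1 * w) * ((p%:R)^-1 * w)^* = B.
Proof.
move=> pp eN; have p0 := pR0 pp.
rewrite rmorphM /= conj_pinv.
have -> : (p%:R)^-1 * w * ((p%:R)^-1 * w^*) = ((p%:R)^-1) ^+ 2 * (w * w^*) by ring.
by rewrite eN mulrA -exprMn mulVf // expr1n mul1r.
Qed.

Lemma natR_inj (m n : nat) : (m%:R : algC) = n%:R -> m = n.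
Proof. by move/eqP; rewrite eqr_nat => /eqP. Qed.

Lemma Pnorm oF P (p : nat) x : admissible_field oF -> nonzero_prime_ideal oF P ->
  prime p -> P p%:R -> P x -> exists k, x * x^* = (p * k)%N%:R.
Proof.
move=> ha HP pp hp hx.
have hxo := P_OF HP hx.
have [n hn] := OF_norm ha hxo.
have hPn : P n%:R by rewrite -hn; apply: (P_mulr HP) => //; apply: OF_conj.
have /dvdnP [k ek] := Pnat_dvd HP pp hp hPn.
by exists k; rewrite hn ek mulnC.
Qed.

Lemma step oF P (p : nat) : admissible_field oF -> nonzero_prime_ideal oF P ->
  prime p -> P p%:R -> exists lam : algC,
  (forall x, P x -> inOF oF (lam * x)) /\
  (forall x n, P x -> x * x^* = n%:R -> (0 < n)%N -> exists n',
     (lam * x) * (lam * x)^* = n'%:R /\ (0 < n')%N /\ (logn p n' < logn p n)%N).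
Proof.
move=> ha HP pp hp.
have p0 := pR0 pp.
have p0' : (0 < p)%N := prime_gt0 pp.
have [[c [nc [Pc [hnc ndv]]]] | nex] := classic (exists c nc, P c /\ c * c^* = nc%:R /\ ~~ ((p * p) %| nc)%N).
- have [k2 hk2] := Pnorm ha HP pp hp Pc.
  have enc : nc = (p * k2)%N by apply: natR_inj; rewrite -hnc hk2.
  have ndv2 : ~~ (p %| k2)%N by move: ndv; rewrite enc dvdn_pmul2l.
  have k20 : (0 < k2)%N by case: k2 ndv2 {hk2 enc} => //; rewrite dvdn0.
  have hc := P_OF HP Pc.
  have key : forall x, P x -> exists k3, x * x^* = (p * k3)%N%:R /\
      inOF oF ((p%:R)^-1 * (c^* * x)) /\
      ((p%:R)^-1 * (c^* * x)) * ((p%:R)^-1 * (c^* * x))^* = (k2 * k3)%N%:R.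
    move=> x Px.
    have hx := P_OF HP Px.
    have [k3 hk3] := Pnorm ha HP pp hp Px.
    have [k1 hk1] := Pnorm ha HP pp hp (P_add HP Pc Px).
    have eN : (c^* * x) * (c^* * x)^* = p%:R ^+ 2 * (k2 * k3)%N%:R.
      rewrite rmorphM /= conjCK.
      transitivity ((c * c^*) * (x * x^*)); first ring.
      rewrite hk2 hk3 !natrM; ring.
    exists k3; split => //; split; last exact: norm_div.
    apply: (OF_div (A := k1%:R - k2%:R - k3%:R) ha pp) eN.
    + by apply: OF_mul => //; apply: OF_conj.
    + by apply: rpredB; [apply: rpredB|]; apply: rpred_nat.
    + by apply: rpred_nat.
    rewrite rmorphM /= conjCK.
    transitivity ((c + x) * (c + x)^* - c * c^* - x * x^*).
      rewrite rmorphD /=; ring.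
    rewrite hk1 hk2 hk3 !natrM; ring.
  exists ((p%:R)^-1 * c^*); split.
    by move=> x Px; have [k3 [_ [h _]]] := key x Px; rewrite -mulrA.
  move=> x n Px hn n0.
  have [k3 [hk3 [_ hN]]] := key x Px.
  have en : n = (p * k3)%N by apply: natR_inj; rewrite -hn hk3.
  have k30 : (0 < k3)%N by move: n0; rewrite en muln_gt0 => /andP [].
  exists (k2 * k3)%N; split; first by move: hN; rewrite !mulrA.
  split; first by rewrite muln_gt0 k20 k30.
  rewrite en logn_Gauss; last by rewrite prime_coprime.
  by rewrite lognM // (logn_prime p pp) eqxx.
- have H : forall c nc, P c -> c * c^* = nc%:R -> ((p * p) %| nc)%N.
    move=> c nc Pc hc; apply/negPn/negP => nd; apply: nex; by exists c, nc.
  exists ((p%:R)^-1); split; last first.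
    move=> x n Px hn n0.
    have /dvdnP [k ek] := H x n Px hn.
    have k0 : (0 < k)%N by move: n0; rewrite ek muln_gt0 => /andP [].
    exists k; split.
      apply: norm_div => //; rewrite hn ek natrM; ring.
    split => //; rewrite ek lognM ?muln_gt0 ?p0' // lognM // (logn_prime p pp) eqxx.
    lia.
  move=> x Px.
  have hx := P_OF HP Px.
  have [n hn] := OF_norm ha hx.
  have /dvdnP [k ek] := H x n Px hn.
  have Pxp : P (x + p%:R) by apply: (P_add HP).
  have [n1 hn1] := OF_norm ha (P_OF HP Pxp).
  have /dvdnP [k1 ek1] := H _ n1 Pxp hn1.
  apply: (OF_div (A := k1%:R - k%:R - 1) (B := k%:R) ha pp) => //.
  + by apply: rpredB; [apply: rpredB; apply: rpred_nat | apply: rpred1].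
  + apply: (mulfI p0).
    transitivity ((x + p%:R) * (x + p%:R)^* - x * x^* - p%:R ^+ 2).
      rewrite rmorphD /= conjC_nat; ring.
    rewrite hn1 hn ek1 ek !natrM; ring.
  + by rewrite hn ek natrM; ring.
Qed.
Lemma det_cw s b al be ga de :
  \det (codeword s b al be ga de) =
  al ^+ 2 - s ^+ 2 * be ^+ 2 - b * ga ^+ 2 + b * s ^+ 2 * de ^+ 2.
Proof.
rewrite (expand_det_row _ 0) !big_ord_recr big_ord0 /= add0r.
rewrite /cofactor !det_mx11 !mxE /=.
rewrite !add0n expr0 expr1; ring.
Qed.

Lemma no_sol oF P (p : nat) pi b : admissible_field oF -> nonzero_prime_ideal oF P ->
  prime p -> P p%:R -> inOF oF b -> nonsquare_mod oF P b -> pval_eq oF P pi 1 ->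
  forall N al be ga de z n, inOF oF al -> inOF oF be -> inOF oF ga -> inOF oF de ->
  al ^+ 2 - pi * be ^+ 2 - b * ga ^+ 2 + b * pi * de ^+ 2 = 0 ->
  (z = al \/ z = be \/ z = ga \/ z = de) -> z * z^* = n%:R -> (0 < n)%N ->
  (logn p n <= N)%N -> False.
Proof.
move=> ha HP pp hp hb nsq hpv.
have [lam [hl1 hl2]] := step ha HP pp hp.
elim=> [|N IH] al be ga de z n hal hbe hga hde E hz hn n0 hN;
  have [Pal Pbe Pga Pde] := all_in_P ha HP pp hp hb nsq hpv hal hbe hga hde E;
  (have Pz : P z by case: hz => [->|[->|[->|->]]]);
  have [n' [hn' [n0' hlt]]] := hl2 z n Pz hn n0.
  lia.
apply: (IH (lam * al) (lam * be) (lam * ga) (lam * de) (lam * z) n');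
  try (by apply: hl1); try done.
- transitivity (lam ^+ 2 * (al ^+ 2 - pi * be ^+ 2 - b * ga ^+ 2 + b * pi * de ^+ 2)).
    ring.
  by rewrite E mulr0.
- by case: hz => [->|[->|[->|->]]]; [left|right;left|right;right;left|right;right;right].
- lia.
Qed.

Unset Implicit Arguments.

Theorem theorem7p3 (oF : option nat) (P : algC -> Prop) (pi b sqpi : algC) :
  admissible_field oF ->
  nonzero_prime_ideal oF P ->
  pval_eq oF P pi 1 ->
  inOF oF b ->
  nonsquare_mod oF P b ->
  sqpi ^+ 2 = pi ->
  exists c : algC, 0 < c /\
    forall al be ga de : algC,
      inOF oF al -> inOF oF be -> inOF oF ga -> inOF oF de ->
      codeword sqpi b al be ga de <> 0 ->
      c <= `|\det (codeword sqpi b al be ga de)| ^+ 2.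
Proof.
move=> ha HP hpv hb nsq hsq.
have [p [pp hp]] := P_nat_prime ha HP.
have hpv' := hpv.
move: hpv' => [_ [[s0 [hs0 [nPs0 hs0pi]]] _]].
have Pt : P (s0 * pi) by apply: (ipow1 HP).
have ht := P_OF HP Pt.
have s00 : s0 != 0.
  by apply/eqP => e; apply: nPs0; rewrite e; apply: (P_0 HP).
have ns0 : 0 < `|s0| ^+ 4 by rewrite exprn_gt0 // normr_gt0.
exists ((`|s0| ^+ 4)^-1); split; first by rewrite invr_gt0.
move=> al be ga de hal hbe hga hde hcw.
rewrite det_cw hsq.
set dt := al ^+ 2 - pi * be ^+ 2 - b * ga ^+ 2 + b * pi * de ^+ 2.
have dt0 : dt != 0.
  apply/eqP => E.
  have [hz|hz] := classic (al = 0 /\ be = 0 /\ ga = 0 /\ de = 0).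
    apply: hcw; move: hz => [-> [-> [-> ->]]].
    apply/matrixP => i j; rewrite !mxE /=.
    by rewrite !(mul0r, mulr0, addr0, subr0) !if_same.
  have [z [hzv z0]] : exists z, (z = al \/ z = be \/ z = ga \/ z = de) /\ z != 0.
    have [a0|a0] := eqVneq al 0; last by exists al; split => //; left.
    have [b0|b0] := eqVneq be 0; last by exists be; split => //; right; left.
    have [g0|g0] := eqVneq ga 0; last by exists ga; split => //; right; right; left.
    have [d0|d0] := eqVneq de 0; last by exists de; split => //; right; right; right.
    by exfalso; apply: hz.
  have hzo : inOF oF z by case: hzv => [->|[->|[->|->]]].
  have [n hn] := OF_norm ha hzo.
  have n0 : (0 < n)%N.
    rewrite lt0n; apply/negP => /eqP n0; move: hn; rewrite n0 => /eqP.
    by rewrite mulf_eq0 conjC_eq0 orbb; apply/negP.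
  exact: (no_sol ha HP pp hp hb nsq hpv hal hbe hga hde E hzv hn n0 (leqnn _)).
set D := s0 ^+ 2 * dt.
have hD : inOF oF D.
  have -> : D = (s0 * s0) * al ^+ 2 - (s0 * pi) * s0 * be ^+ 2 - (s0 * s0) * b * ga ^+ 2
      + b * (s0 * pi) * s0 * de ^+ 2 by rewrite /D /dt; ring.
  have sq : forall x, inOF oF x -> inOF oF (x ^+ 2) by move=> x hx; rewrite expr2; apply: OF_mul.
  repeat (assumption || apply: OF_add || apply: OF_opp || apply: OF_mul || apply: sq).
have [m hm] := OF_norm ha hD.
have D0 : D != 0 by rewrite /D mulf_neq0 // expf_neq0.
have m1 : (1 <= (m%:R : algC)).
  rewrite ler1n lt0n; apply/negP => /eqP m0; move: hm; rewrite m0 => /eqP.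
  by rewrite mulf_eq0 conjC_eq0 orbb; apply/negP.
have eD : `|D| ^+ 2 = `|s0| ^+ 4 * `|dt| ^+ 2.
  by rewrite /D normrM normrX exprMn -exprM.
have edt : `|dt| ^+ 2 = m%:R * (`|s0| ^+ 4)^-1.
  rewrite -hm -normCK eD mulrC mulrA mulVf ?mul1r //.
  by rewrite gt_eqF.
rewrite edt -[X in X <= _]mul1r ler_wpM2r //.
by rewrite invr_ge0 ltW.
Qed.
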